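(* Let $1\le r\le s\le t$ and let $u=ABCd$, $v=A'B'C'd'$ be vertices of $E3C(r,s,t)$ with $A=A'$, $B=B'$, $C=C'$ and $d\ne d'$. Then there exist $2r+2$ pairwise internally disjoint $u$–$v$ paths in $E3C(r,s,t)$, each of length at most $7$.
   Context: The exchanged 3-ary $n$-cube $E3C(r,s,t)$ ($r,s,t\ge1$, $n=r+s+t+1$): vertices are strings written $x=ABCd$ with $A\in\{0,1,2\}^r$, $B\in\{0,1,2\}^s$, $C\in\{0,1,2\}^t$, $d\in\{0,1,2\}$. Two distinct vertices $x=ABCd$, $y=A'B'C'd'$ are adjacent iff one of: (E0) $A=A',B=B',C=C'$ and $d\ne d'$; (E1) $d=d'=0$, $A=A'$, $B=B'$ and $C,C'$ differ in exactly one position; (E2) $d=d'=1$, $A=A'$, $C=C'$ and $B,B'$ differ in exactly one position; (E3) $d=d'=2$, $B=B'$, $C=C'$ and $A,A'$ differ in exactly one position. Paths are internally disjoint if they share no vertices other than their endpoints; length = number of edges. *)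

(* Defs.v *)
From mathcomp Require Import all_boot.
Set Implicit Arguments. Unset Strict Implicit. Unset Printing Implicit Defensive.

Definition e3c_vertex (r s t : nat) : finType :=
  (r.-tuple 'I_3 * s.-tuple 'I_3 * t.-tuple 'I_3 * 'I_3)%type.

Section E3C.
Variables r s t : nat.
Local Notation V := (e3c_vertex r s t).

Definition vA (x : V) : r.-tuple 'I_3 := x.1.1.1.
Definition vB (x : V) : s.-tuple 'I_3 := x.1.1.2.
Definition vC (x : V) : t.-tuple 'I_3 := x.1.2.
Definition vd (x : V) : 'I_3 := x.2.

Definition differ_one (n : nat) (X Y : n.-tuple 'I_3) : bool :=
  #|[set i : 'I_n | tnth X i != tnth Y i]| == 1.

Definition e3c_adj : rel V := fun x y =>
  [|| [&& vA x == vA y, vB x == vB y, vC x == vC y & vd x != vd y]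
    , [&& vd x == 0 :> nat, vd y == 0 :> nat, vA x == vA y, vB x == vB y
        & differ_one (vC x) (vC y)]
    , [&& vd x == 1 :> nat, vd y == 1 :> nat, vA x == vA y, vC x == vC y
        & differ_one (vB x) (vB y)]
    | [&& vd x == 2 :> nat, vd y == 2 :> nat, vB x == vB y, vC x == vC y
        & differ_one (vA x) (vA y)] ].

Definition is_path_uv (u v : V) (p : seq V) : Prop :=
  [/\ head u p = u, last u p = v, p != [::], path e3c_adj (head u p) (behead p)
    & uniq p].

Definition path_length (p : seq V) : nat := (size p).-1.

Definition internal (p : seq V) : seq V := drop 1 (take (size p).-1 p).

Definition int_disjoint (P : seq (seq V)) : Prop :=
  forall i j, i < size P -> j < size P -> i != j ->
    forall x, x \in internal (nth [::] P i) -> x \notin internal (nth [::] P j).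

End E3C.

(* Main.v *)
Require Import Defs.
From mathcomp Require Import all_boot zify.
Set Implicit Arguments. Unset Strict Implicit. Unset Printing Implicit Defensive.

Definition tupd n (X : n.-tuple 'I_3) (i a : nat) : n.-tuple 'I_3 :=
  [tuple (if j == i :> nat then inord ((tnth X j + a) %% 3) else tnth X j) | j < n].

Definition tget n (X : n.-tuple 'I_3) (j : nat) : nat := nth (@ord0 2) X j.

Lemma tget_lt3 n (X : n.-tuple 'I_3) j : tget X j < 3.
Proof. exact: ltn_ord. Qed.

Lemma tget_upd n (X : n.-tuple 'I_3) i a j : i < n ->
  tget (tupd X i a) j = if j == i then (tget X j + a) %% 3 else tget X j.
Proof.
move=> Hi; rewrite /tget.
case: (ltnP j n) => Hj.
- rewrite -!(tnth_nth _ _ (Ordinal Hj)) tnth_mktuple /=.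
  case: (j == i) => //. by rewrite inordK // ltn_mod.
- rewrite !nth_default ?size_tuple //.
  have -> : (j == i) = false by apply/eqP => E; subst; lia.
  by [].
Qed.

Lemma differ_upd n (X : n.-tuple 'I_3) i a : i < n -> a %% 3 != 0 ->
  differ_one X (tupd X i a) /\ differ_one (tupd X i a) X.
Proof.
move=> Hi Ha.
have E : [set j : 'I_n | tnth X j != tnth (tupd X i a) j] = [set Ordinal Hi].
  apply/setP => j; rewrite !inE tnth_mktuple.
  have -> : (j == Ordinal Hi) = (j == i :> nat) by rewrite -val_eqE.
  case: (eqVneq (j : nat) i) => [Eji|Nji].
  - apply/eqP => E; have := congr1 (@nat_of_ord 3) E; rewrite inordK ?ltn_mod //.
    have := ltn_ord (tnth X j); lia.
  - by rewrite eqxx.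
split; rewrite /differ_one.
- by rewrite E cards1.
- have E2 : [set j | tnth (tupd X i a) j != tnth X j]
     = [set j | tnth X j != tnth (tupd X i a) j].
    by apply/setP => j; rewrite !inE eq_sym.
  by rewrite E2 E cards1.
Qed.

Section S.
Variables r s t : nat.
Hypotheses (Hrs : r <= s) (Hst : s <= t).
Local Notation K := (r.-tuple 'I_3 * s.-tuple 'I_3 * t.-tuple 'I_3)%type.
Local Notation V := (e3c_vertex r s t).

Definition mv (e : 'I_3) (i a : nat) (c : K) : K :=
  match val e with
  | 0 => (c.1.1, c.1.2, tupd c.2 i a)
  | 1 => (c.1.1, tupd c.1.2 i a, c.2)
  | _ => (tupd c.1.1 i a, c.1.2, c.2) end.

Definition pget (e : 'I_3) (c : K) (j : nat) : nat :=
  match val e with | 0 => tget c.2 j | 1 => tget c.1.2 j | _ => tget c.1.1 j end.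

Lemma pget_lt3 e c j : pget e c j < 3.
Proof. by rewrite /pget; case: (val e) => [|[|?]]; apply: tget_lt3. Qed.

Lemma pget_mv e e' i a c j : i < r ->
  pget e' (mv e i a c) j = if (e' == e) && (j == i) then (pget e c j + a) %% 3 else pget e' c j.
Proof.
move=> Hi. have Hs : i < s by lia. have Ht : i < t by lia.
case: e => [[|[|[|k]]] He] //; case: e' => [[|[|[|k']]] He'] //;
  rewrite -val_eqE /pget /mv /= ?tget_upd //.
Qed.

Lemma adj_mv e i a (c : K) : i < r -> a %% 3 != 0 ->
  e3c_adj ((c, e) : V) (mv e i a c, e) /\ e3c_adj ((mv e i a c, e) : V) (c, e).
Proof.
move=> Hi Ha. have Hs : i < s by lia. have Ht : i < t by lia.
case: e => [[|[|[|k]]] He] //; rewrite /e3c_adj /vA /vB /vC /vd /mv /=.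
- have [D1 D2] := differ_upd c.2 Ht Ha; by rewrite !eqxx D1 D2 /= ?orbT.
- have [D1 D2] := differ_upd c.1.2 Hs Ha; by rewrite !eqxx D1 D2 /= ?orbT.
- have [D1 D2] := differ_upd c.1.1 Hi Ha; by rewrite !eqxx D1 D2 /= ?orbT.
Qed.

Lemma adj0 (c : K) (e e' : 'I_3) : e != e' -> e3c_adj ((c,e) : V) (c,e').
Proof. by move=> H; rewrite /e3c_adj /vA /vB /vC /vd /= !eqxx H. Qed.

Lemma mv_comm e e' i a c : e != e' -> mv e' i a (mv e i a c) = mv e i a (mv e' i a c).
Proof.
case: e => [[|[|[|k]]] He] //; case: e' => [[|[|[|k']]] He'] //; rewrite -val_eqE //=.
Qed.


Definition Pth (c : K) (d d' : 'I_3) (i a : nat) : seq V :=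
  [:: (c,d); (mv d i a c, d); (mv d i a c, d'); (mv d' i a (mv d i a c), d');
      (mv d' i a (mv d i a c), d); (mv d' i a c, d); (mv d' i a c, d'); (c,d')].

Definition Q (c : K) (d d' : 'I_3) (i a : nat) (x : V) : Prop :=
  [/\ x.2 = d \/ x.2 = d',
   (forall k, k <> i -> pget d x.1 k = pget d c k /\ pget d' x.1 k = pget d' c k),
   (pget d x.1 i <> pget d c i \/ pget d' x.1 i <> pget d' c i),
   (pget d x.1 i = pget d c i \/ pget d x.1 i = (pget d c i + a) %% 3) &
   (pget d' x.1 i = pget d' c i \/ pget d' x.1 i = (pget d' c i + a) %% 3)].

Lemma Q_internal c d d' i a x : i < r -> (a == 1) || (a == 2) -> d != d' ->
  x \in internal (Pth c d d' i a) -> Q c d d' i a x.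
Proof.
move=> Hi Ha Hdd.
have E1 : (d == d') = false by apply/negbTE.
have E2 : (d' == d) = false by rewrite eq_sym; apply/negbTE.
have Lp := pget_lt3 d c i. have Lq := pget_lt3 d' c i.
rewrite /internal /= !inE.
case/orP => [/eqP->|]; last case/orP => [/eqP->|]; last case/orP => [/eqP->|];
last case/orP => [/eqP->|]; last case/orP => [/eqP->|]; last move=> /eqP->;
(split; [ by auto | move=> k /eqP /negbTE Hk | | | ]; rewrite /= !pget_mv // ?E1 ?E2 ?eqxx ?Hk //=;
 lia).
Qed.

Lemma Q_contra c d d' i a i' a' x : (a == 1) || (a == 2) -> (a' == 1) || (a' == 2) ->
  (i, a) != (i', a') -> Q c d d' i a x -> Q c d d' i' a' x -> False.
Proof.
move=> Ha Ha' Hne [_ H1 H2 H3 H4] [_ H1' H2' H3' H4'].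
have Lp := pget_lt3 d c i. have Lq := pget_lt3 d' c i.
case: (eqVneq i i') => [Eii|Nii].
- subst i'. have Naa : a <> a' by move=> E; subst; rewrite eqxx in Hne.
  lia.
- have Nii' : i <> i' by apply/eqP.
  have [] := H1' i Nii'; lia.
Qed.


Lemma Pth_ok c d d' i a : i < r -> (a == 1) || (a == 2) -> d != d' ->
  is_path_uv ((c,d) : V) (c,d') (Pth c d d' i a) /\ path_length (Pth c d d' i a) <= 7.
Proof.
move=> Hi Ha Hdd.
have Ha3 : a %% 3 != 0 by apply/eqP; lia.
have E1 : (d == d') = false by apply/negbTE.
have E2 : (d' == d) = false by rewrite eq_sym; apply/negbTE.
split => //; split => //.
- rewrite /=.
  have [A1 A2] := adj_mv d c Hi Ha3.
  have [B1 B2] := adj_mv d' (mv d i a c) Hi Ha3.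
  have [C1 C2] := adj_mv d (mv d' i a c) Hi Ha3.
  have [D1 D2] := adj_mv d' c Hi Ha3.
  rewrite A1 B1 D2 adj0 // adj0 ?E2 // adj0 ?E1 //=.
  by rewrite (mv_comm _ _ _ Hdd) C2.
- apply: (@map_uniq _ _ (fun x : V => (val x.2, pget d x.1 i, pget d' x.1 i))).
  rewrite /= !pget_mv // ?E1 ?E2 !eqxx /=.
  have Lp := pget_lt3 d c i. have Lq := pget_lt3 d' c i.
  set p := pget d c i; set q := pget d' c i.
  have F1 : (p == (p + a) %% 3) = false by apply/eqP; lia.
  have F2 : ((p + a) %% 3 == p) = false by apply/eqP; lia.
  have F3 : (q == (q + a) %% 3) = false by apply/eqP; lia.
  have F4 : ((q + a) %% 3 == q) = false by apply/eqP; lia.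
  have F5 : (val d == val d') = false by rewrite val_eqE.
  have F6 : (val d' == val d) = false by rewrite val_eqE.
  by rewrite !inE !xpair_eqE !eqxx F1 F2 F3 F4 F5 F6 /=.
Qed.

End S.

Lemma third (d d' : 'I_3) : d != d' -> exists e : 'I_3, e != d /\ e != d'.
Proof.
case: d => [[|[|[|k]]] He] //; case: d' => [[|[|[|k']]] He'] //; rewrite -val_eqE //= => _;
first [ by exists (@Ordinal 3 0 isT) | by exists (@Ordinal 3 1 isT) | by exists (@Ordinal 3 2 isT) ].
Qed.

Theorem lemma14 (r s t : nat) (u v : e3c_vertex r s t) :
  1 <= r -> r <= s -> s <= t ->
  vA u = vA v -> vB u = vB v -> vC u = vC v -> vd u != vd v ->
  exists P : seq (seq (e3c_vertex r s t)),
    [/\ size P = (2 * r + 2)%N, uniq P,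
        (forall p, p \in P -> is_path_uv u v p /\ path_length p <= 7)
      & int_disjoint P].
Proof.
move=> Hr Hrs Hst.
case: u => cu du; case: v => cv dv.
rewrite /vA /vB /vC /vd /= => HA HB HC Hd.
have Ec : cu = cv.
  by move: HA HB HC; case: cu => [[? ?] ?]; case: cv => [[? ?] ?] /= -> -> ->.
subst cv.
have [e [He1 He2]] := third Hd.
set L := [seq (x, y) | x <- iota 0 r, y <- [:: 1; 2]].
have HL : forall ia, ia \in L -> ia.1 < r /\ ((ia.2 == 1) || (ia.2 == 2)).
  move=> ia /allpairsP [[x y] [/= Hx Hy ->]] /=.
  rewrite mem_iota in Hx. rewrite !inE in Hy. split => //; lia.
have UL : uniq L.
  apply: allpairs_uniq; [exact: iota_uniq | by [] | by move=> [? ?] [? ?] _ _ /= [-> ->]].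
set Ps := map (fun ia => Pth cu du dv ia.1 ia.2) L.
have SP : size Ps = size L by rewrite size_map.
have Qin : forall k x, k < size L -> x \in internal (nth [::] Ps k) ->
    Q cu du dv (nth (0,0) L k).1 (nth (0,0) L k).2 x.
  move=> k x Hk; rewrite (nth_map (0,0)) //.
  have [H1 H2] := HL _ (mem_nth (0,0) Hk); exact: Q_internal.
have Qdig : forall k, k < size L -> (cu, e) \notin internal (nth [::] Ps k).
  move=> k Hk; apply/negP => /(Qin _ _ Hk) [[/= E|/= E] _ _ _ _];
  by move: He1 He2; rewrite E eqxx.
exists [:: [:: (cu,du); (cu,dv)], [:: (cu,du); (cu,e); (cu,dv)] & Ps]; split.
- by rewrite /= SP size_allpairs size_iota /=; lia.
- rewrite /=; apply/and3P; split.
  + rewrite !inE negb_or; apply/andP; split.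
    * by apply/eqP => /(congr1 size).
    * by apply/mapP => -[ia _ /(congr1 size)].
  + by apply/mapP => -[ia _ /(congr1 size)].
  + rewrite map_inj_in_uniq // => [[i a]] [i' a'] Hia Hia' E.
    case: (eqVneq (i, a) (i', a')) => // Ne; exfalso.
    have [H1 H2] := HL _ Hia; have [H1' H2'] := HL _ Hia'.
    have X1 : (mv du i a cu, du) \in internal (Pth cu du dv i a) by rewrite /internal /= inE eqxx.
    have X2 := X1; rewrite /= in E; rewrite E in X2.
    exact: (Q_contra Hrs Hst H2 H2' Ne (Q_internal Hrs Hst H1 H2 Hd X1) (Q_internal Hrs Hst H1' H2' Hd X2)).
- move=> p; rewrite !inE => /orP [/eqP->|/orP [/eqP->|/mapP [ia Hia ->]]].
  + split => //; split => //=.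
    * by rewrite adj0.
    * by rewrite inE xpair_eqE eqxx (negbTE Hd).
  + split => //; split => //=.
    * by rewrite adj0 ?adj0 // eq_sym.
    * by rewrite !inE !xpair_eqE !eqxx /= (negbTE Hd) eq_sym (negbTE He1) (negbTE He2).
  + have [H1 H2] := HL _ Hia; exact: Pth_ok.
- move=> i j Hi Hj Hij x.
  case: i Hi Hij => [|[|i]] Hi Hij Hx.
  + by rewrite /internal /= in Hx.
  + rewrite /internal /= inE in Hx; move/eqP: Hx => ->.
    case: j Hj Hij => [|[|j]] Hj Hij //.
    rewrite /= SP in Hj; exact: Qdig.
  + rewrite /= SP in Hi.
    case: j Hj Hij => [|[|j]] Hj Hij //.
    * apply/negP; rewrite /internal /= inE => /eqP Ex.
      by move: Hx; rewrite Ex; apply/negP; apply: Qdig.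
    * rewrite /= SP in Hj; apply/negP => Hx'.
      have Q1 := Qin _ _ Hi Hx; have Q2 := Qin _ _ Hj Hx'.
      have [_ A1] := HL _ (mem_nth (0,0) Hi); have [_ A2] := HL _ (mem_nth (0,0) Hj).
      have Ne : nth (0,0) L i != nth (0,0) L j by rewrite nth_uniq.
      move: Ne Q1 Q2; case: (nth (0,0) L i) A1 => i1 a1 /= A1;
        case: (nth (0,0) L j) A2 => j1 b1 /= A2 Ne Q1 Q2.
      exact: (Q_contra Hrs Hst A1 A2 Ne Q1 Q2).
Qed.
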